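(* Let $X$ be a compactum, $Y$ a compactum in the Hilbert cube $I^\infty$, and $Y_1\supset Y_2\supset\cdots$ compact prism neighbourhoods of $Y$ with $\bigcap_kY_k=Y$ and inclusions $p_k:Y_{k+1}\to Y_k$. Let $T_{X,Y}$ be the rooted simplicial tree of the inverse sequence of sets $([X,Y_k],p_k^* )_{k\ge1}$, where $p_k^*[g]=[p_k\circ g]$. Then there is a bijection between the homotopy classes of approximative maps from $X$ towards $Y$ and the geodesically complete branches of $T_{X,Y}$.
   Context: A compactum is a compact metric space; a prism is a space homeomorphic to $P\times I^\infty$ with $P$ a compact polyhedron. $[X,Y_k]$ is the set of homotopy classes of continuous maps $X\to Y_k$. For an inverse sequence of sets $(S_n,r_n)$, $r_n:S_{n+1}\to S_n$, its tree is the geometric realization of the graph with vertices $\{v\}\sqcup\bigsqcup_nS_n$ and edges $\{x,r_n(x)\}$ ($x\in S_{n+1}$), $\{x,v\}$ ($x\in S_1$), edges of length 1, path metric, rooted at $v$. A geodesically complete branch is an isometric embedding $F:[0,\infty)\to T_{X,Y}$ with $F(0)=v$. An approximative map of $X$ towards $Y$ is a sequence of continuous maps $f_k:X\to Y_k$ such that for every $N$ there is $m(N)$ with $p_t\circ f_{t+1}\simeq f_t$ in $Y_N$ for all $t\ge m(N)$; two approximative maps $\{f_k\},\{g_k\}$ are homotopic if for every neighbourhood $V$ of $Y$ in $I^\infty$ there is $k_0$ with $f_k\simeq g_k$ in $V$ for all $k\ge k_0$. *)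

(* Defs.v *)
From HB Require Import structures.
From mathcomp Require Import all_boot all_order all_algebra.
From mathcomp Require Import all_classical all_reals all_analysis.
Import Order.TTheory GRing.Theory Num.Theory numFieldNormedType.Exports.
Set Implicit Arguments.
Unset Strict Implicit.
Unset Printing Implicit Defensive.
Local Open Scope classical_set_scope.
Local Open Scope ring_scope.

Section InverseSequenceTree.
Variable R : realType.
Variable U : Type.
(* the inverse sequence: S n (n = 0,1,2,... stands for the paper's
   S_1, S_2, S_3, ...) as subsets of an ambient type U, with bonding
   maps r n : S (n+1) -> S n *)
Variable S : nat -> set U.
Variable r : nat -> U -> U.

(* vertices: None is the root v, Some (n, x) is x in S n *)
Definition tvtx := option (nat * U).

Definition is_tvtx (a : tvtx) : Prop :=
  match a with None => True | Some (n, x) => S n x end.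

Definition tadj0 (a b : tvtx) : Prop :=
  match a, b with
  | Some (O, x), None => S O x
  | Some (Datatypes.S n, x), Some (m, y) => [/\ S n.+1 x, m = n, y = r n x & S n y]
  | _, _ => False
  end.

Definition tadj (a b : tvtx) : Prop := tadj0 a b \/ tadj0 b a.

Inductive twalk : tvtx -> tvtx -> nat -> Prop :=
| twalk0 a : twalk a a 0
| twalkS a b c m : tadj a b -> twalk b c m -> twalk a c m.+1.

(* points of the geometric realization: a vertex, or the point of the
   edge {a,b} at distance t (0<t<1) from a.  Ex a b t and Ex b a (1-t)
   denote the same point (they are at distance 0). *)
Inductive tpoint :=
| Vx of tvtx
| Ex of tvtx & tvtx & R.

Definition valid_tpoint (p : tpoint) : Prop :=
  match p with
  | Vx a => is_tvtx a
  | Ex a b t => tadj a b /\ 0 < t < 1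
  end.

Definition exit_of (p : tpoint) (u : tvtx) (e : R) : Prop :=
  match p with
  | Vx a => u = a /\ e = 0
  | Ex a b t => (u = a /\ e = t) \/ (u = b /\ e = 1 - t)
  end.

(* path metric (all edges of length 1): infimum of the lengths of the
   paths from p to q; a path either stays inside one edge or leaves the
   cell of p through an endpoint, follows an edge walk, and enters the
   cell of q through an endpoint. *)
Definition path_lengths (p q : tpoint) : set R :=
  [set d | (exists u e1 w e2 m,
              [/\ exit_of p u e1, exit_of q w e2, twalk u w m &
                  d = e1 + m%:R + e2])
        \/ (exists a b t s, p = Ex a b t /\
              ((q = Ex a b s /\ d = `|t - s|) \/
               (q = Ex b a s /\ d = `|t - (1 - s)|)))].

Definition tdist (p q : tpoint) : R := inf (path_lengths p q).

Definition troot : tpoint := Vx None.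

Definition geod_complete_branch (F : R -> tpoint) : Prop :=
  [/\ forall t, 0 <= t -> valid_tpoint (F t),
      F 0 = troot &
      forall s t, 0 <= s -> 0 <= t -> tdist (F s) (F t) = `|s - t| ].

Definition branch_eq (F G : R -> tpoint) : Prop :=
  forall t, 0 <= t -> tdist (F t) (G t) = 0.

End InverseSequenceTree.

Definition realT (R : realType) : topologicalType := Real.sort R.
Notation cube R := (prod_topology (fun _ : nat => realT R)).

Section Shape.
Variable R : realType.
Local Notation cube := (cube R).

Definition hilbert_cube : set cube := [set y | forall n, 0 <= y n <= 1].

Definition nbhd_in_cube (Y V : set cube) : Prop :=
  V `<=` hilbert_cube /\
  exists O : set cube, [/\ open O, Y `<=` O `&` hilbert_cube &
                          O `&` hilbert_cube `<=` V].

(* compact polyhedra in R^n: finite unions of (geometric) simplices *)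
Definition aff_indep n (c : seq 'rV[R]_n) : Prop :=
  forall l : nat -> R,
    \sum_(i < size c) l i = 0 -> \sum_(i < size c) l i *: c`_i = 0 ->
    forall i, (i < size c)%N -> l i = 0.

Definition simplex n (c : seq 'rV[R]_n) : set 'rV[R]_n :=
  [set x | exists l : nat -> R,
     [/\ forall i, 0 <= l i, \sum_(i < size c) l i = 1 &
         x = \sum_(i < size c) l i *: c`_i]].

Definition compact_polyhedron n (P : set 'rV[R]_n) : Prop :=
  exists s : seq (seq 'rV[R]_n),
    (forall c, c \in s -> aff_indep c) /\
    P = [set x | exists2 c, c \in s & simplex c x].

Definition homeomorphic_sets {T1 T2 : topologicalType}
  (A : set T1) (B : set T2) : Prop :=
  exists (h : T1 -> T2) (k : T2 -> T1),
    [/\ {within A, continuous h}, {within B, continuous k},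
        (forall a, A a -> B (h a)), (forall b, B b -> A (k b)) &
        ((forall a, A a -> k (h a) = a) /\ (forall b, B b -> h (k b) = b))].

Definition is_prism (A : set cube) : Prop :=
  exists n (P : set 'rV[R]_n), compact_polyhedron P /\
    homeomorphic_sets A [set p : 'rV[R]_n * cube | P p.1 /\ hilbert_cube p.2].

Variable X : topologicalType.

Definition cont_into (A : set cube) (f : X -> cube) : Prop :=
  continuous f /\ forall x, A (f x).

Definition homotopic_in (A : set cube) (f g : X -> cube) : Prop :=
  [/\ cont_into A f, cont_into A g &
   exists H : X * R -> cube,
     [/\ {within [set p : X * R | 0 <= p.2 <= 1], continuous H},
         (forall x, H (x, 0) = f x), (forall x, H (x, 1) = g x) &
         (forall x t, 0 <= t <= 1 -> A (H (x, t)))]].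

Definition homclass (A : set cube) (f : X -> cube) : set (X -> cube) :=
  [set g | homotopic_in A f g].

Definition hclasses (Yk : nat -> set cube) (k : nat) : set (set (X -> cube)) :=
  [set c | exists f, cont_into (Yk k) f /\ c = homclass (Yk k) f].

(* p_k^* [g] = [p_k o g] (p_k the inclusion Y_{k+1} -> Y_k):
   the class in Y_k of the members of c *)
Definition pstar (Yk : nat -> set cube) (k : nat) (c : set (X -> cube)) :
  set (X -> cube) :=
  [set g | exists2 f, c f & homotopic_in (Yk k) f g].

Definition approximative (Yk : nat -> set cube) (f : nat -> X -> cube) : Prop :=
  (forall k, cont_into (Yk k) (f k)) /\
  forall N, exists m, forall t, (m <= t)%N -> homotopic_in (Yk N) (f t.+1) (f t).

Definition approx_homotopic (Y : set cube) (f g : nat -> X -> cube) : Prop :=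
  forall V, nbhd_in_cube Y V ->
    exists k0, forall k, (k0 <= k)%N -> homotopic_in V (f k) (g k).

End Shape.

(* Main.v *)
Require Import Defs.
From HB Require Import structures.
From mathcomp Require Import all_boot all_order all_algebra.
From mathcomp Require Import all_classical all_reals all_analysis.
From mathcomp Require Import ring lra zify.
Import Order.TTheory GRing.Theory Num.Theory numFieldNormedType.Exports.
Set Implicit Arguments.
Unset Strict Implicit.
Unset Printing Implicit Defensive.
Local Open Scope classical_set_scope.
Local Open Scope ring_scope.

Section Htpy.
Variables (R : realType) (X : topologicalType).

Lemma within_comp (A B : set (X * R)) (phi : X * R -> X * R) (H : X * R -> cube R) :
  {within A, continuous H} -> continuous phi -> (forall p, B p -> A (phi p)) ->
  {within B, continuous (H \o phi)}.
Proof.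
move=> /subspace_continuousP cH cphi BA; apply/subspace_continuousP => x Bx.
move=> W nW; have := cH _ (BA _ Bx) W nW.
rewrite /= /within /= => nA.
have nA' : nbhs (phi x) [set y | A y -> W (H y)] by exact: nA.
have := cphi x _ nA'.
move=> h.
have h2 : nbhs x [set y | B y -> W (H (phi y))].
  by apply: (@filterS _ _ _ (phi @^-1` [set y | A y -> W (H y)])) h => y /= Ay By; exact: Ay (BA _ By).
exact: h2.
Qed.

Lemma aff (a b : R) : continuous (fun t : R => a * t + b).
Proof.
move=> t.
apply: (@continuousD _ _ _ (fun t => a * t) (cst b)).
  apply: (@continuousM _ _ (cst a) id); [exact: cvg_cst|exact: cvg_id].
exact: cvg_cst.
Qed.

Lemma cont_map2 (g : R -> R) : continuous g -> continuous (fun p : X * R => (p.1, g p.2)).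
Proof.
move=> cg [x t].
apply: (@cvg_pair _ _ _ _ (nbhs x) (nbhs (g t))) => /=.
  exact: cvg_fst.
apply: (@cvg_comp _ _ _ snd g _ (nbhs t)); [exact: cvg_snd | exact: cg].
Qed.

Lemma closed_strip (a b : R) : closed [set p : X * R | a <= p.2 <= b].
Proof.
have -> : [set p : X * R | a <= p.2 <= b] = snd @^-1` ([set t | a <= t] `&` [set t | t <= b]).
  by apply/seteqP; split => p /=; [move/andP | move=> [-> ->]].
have : continuous (@snd X R) by move=> [x t]; exact: cvg_snd.
move/continuous_closedP; apply; apply: closedI; [exact: closed_ge | exact: closed_le].
Qed.

Lemma cont_into_mono (A B : set (cube R)) (f : X -> cube R) :
  A `<=` B -> cont_into A f -> cont_into B f.
Proof. by move=> AB [cf Af]; split=> // x; exact: AB. Qed.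

Lemma htpy_mono (A B : set (cube R)) (f g : X -> cube R) :
  A `<=` B -> homotopic_in A f g -> homotopic_in B f g.
Proof.
move=> AB [cf cg [H [cH H0 H1 HA]]]; split; try exact: cont_into_mono AB _.
exists H; split=> // x t t01; exact/AB/HA.
Qed.

Lemma htpy_refl (A : set (cube R)) (f : X -> cube R) :
  cont_into A f -> homotopic_in A f f.
Proof.
move=> [cf Af]; split=> //; exists (f \o fst); split=> //; last first.
  by move=> x t _; exact: Af.
apply: continuous_subspaceT => p; apply: continuous_comp; last exact: cf.
exact: cvg_fst.
Qed.

Lemma htpy_sym (A : set (cube R)) (f g : X -> cube R) :
  homotopic_in A f g -> homotopic_in A g f.
Proof.
move=> [cf cg [H [cH H0 H1 HA]]]; split=> //.
exists (H \o (fun p : X * R => (p.1, -1 * p.2 + 1))); split.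
- have cp := cont_map2 (@aff (-1) 1).
  apply: (within_comp cH cp).
  by move=> [x t] /= /andP[t0 t1]; apply/andP; split; lra.
- by move=> x /=; have -> : -1 * 0 + 1 = (1:R) by lra.
- by move=> x /=; have -> : -1 * 1 + 1 = (0:R) by lra.
- by move=> x t /andP[t0 t1] /=; apply: HA; apply/andP; split; lra.
Qed.

Lemma htpy_trans (A : set (cube R)) (f g h : X -> cube R) :
  homotopic_in A f g -> homotopic_in A g h -> homotopic_in A f h.
Proof.
move=> [cf cg [H1 [cH1 H10 H11 HA1]]] [_ ch [H2 [cH2 H20 H21 HA2]]]; split=> //.
pose H p := if p.2 <= 1/2 then H1 (p.1, 2 * p.2 + 0) else H2 (p.1, 2 * p.2 + -1).
exists H; split.
- have -> : [set p : X * R | 0 <= p.2 <= 1] =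
     [set p : X * R | 0 <= p.2 <= 1/2] `|` [set p : X * R | 1/2 <= p.2 <= 1].
    apply/seteqP; split => [[x t]|[x t]] /=.
      move=> /andP[t0 t1]; have [th|th] := lerP t (1/2).
        by left; apply/andP; split.
      by right; apply/andP; split => //; lra.
    by case=> /andP[t0 t1]; apply/andP; split; lra.
  apply: withinU_continuous; try exact: closed_strip.
  + have c1 : {within [set p : X * R | 0 <= p.2 <= 1/2],
       continuous (H1 \o (fun p : X * R => (p.1, 2 * p.2 + 0)))}.
      apply: (within_comp cH1 (cont_map2 (@aff 2 0))).
      by move=> [x t] /= /andP[t0 t1]; apply/andP; split; lra.
    apply: subspace_eq_continuous c1 => -[x t] /[1!inE] /= /andP[t0 t1].
    by rewrite /from_subspace /H /= t1.
  + have c2 : {within [set p : X * R | 1/2 <= p.2 <= 1],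
       continuous (H2 \o (fun p : X * R => (p.1, 2 * p.2 + -1)))}.
      apply: (within_comp cH2 (cont_map2 (@aff 2 (-1)))).
      by move=> [x t] /= /andP[t0 t1]; apply/andP; split; lra.
    apply: subspace_eq_continuous c2 => -[x t] /[1!inE] /= /andP[t0 t1].
    rewrite /from_subspace /H /=; case: ifPn => // th.
    have -> : t = 1/2 by apply/eqP; rewrite eq_le th t0.
    have -> : 2 * (1/2) + 0 = (1 : R) by lra.
    have -> : 2 * (1/2) + -1 = (0 : R) by lra.
    by rewrite H11 H20.
- move=> x; rewrite /H /= ifT; last by lra.
  by have -> : 2 * 0 + 0 = (0 : R) by lra.
- move=> x; rewrite /H /= ifF; last by apply/negbTE; rewrite -ltNge; lra.
  by have -> : 2 * 1 + -1 = (1 : R) by lra.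
- move=> x t /andP[t0 t1]; rewrite /H /=; case: ifPn => th.
    by apply: HA1; apply/andP; split; lra.
  by rewrite -ltNge in th; apply: HA2; apply/andP; split; lra.
Qed.
End Htpy.

Section Classes.
Variables (R : realType) (X : topologicalType).

Lemma homclass_eq (A : set (cube R)) (f g : X -> cube R) :
  homotopic_in A f g -> homclass A f = homclass A g.
Proof.
move=> fg; apply/seteqP; split => h /=.
  by move=> fh; apply: htpy_trans (htpy_sym fg) fh.
by move=> gh; apply: htpy_trans fg gh.
Qed.

Lemma homclass_self (A : set (cube R)) (f : X -> cube R) :
  cont_into A f -> homclass A f f.
Proof. by move=> cf; exact: htpy_refl. Qed.

Lemma homclass_inv (A : set (cube R)) (f g : X -> cube R) :
  homclass A f = homclass A g -> cont_into A g -> homotopic_in A f g.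
Proof. move=> e cg; have : homclass A g g by exact: homclass_self.
by rewrite -e. Qed.

Lemma pstar_homclass (Yk : nat -> set (cube R)) k (B : set (cube R)) (f : X -> cube R) :
  B `<=` Yk k -> cont_into B f -> pstar Yk k (homclass B f) = homclass (Yk k) f.
Proof.
move=> BY cf; apply/seteqP; split => h /=.
  by move=> [f' ff' f'h]; apply: htpy_trans (htpy_mono BY ff') f'h.
move=> fh; exists f => //; exact: homclass_self.
Qed.
End Classes.

Lemma decr_le (R : realType) (Yk : nat -> set (cube R)) :
  (forall k, Yk k.+1 `<=` Yk k) -> forall n m, (n <= m)%N -> Yk m `<=` Yk n.
Proof.
move=> dec n m /subnK <-; elim: (m - n)%N => [|d IH] //=.
by rewrite addSn; apply: subset_trans (dec _) IH.
Qed.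

Section PCube.
Variable R : realType.
HB.instance Definition _ := isPointed.Build (cube R) (fun _ => 0).
End PCube.

Lemma eventually_inside (R : realType) (Y V : set (cube R)) (Yk : nat -> set (cube R)) :
  (forall k, compact (Yk k) /\ Yk k `<=` @hilbert_cube R) ->
  (forall k, Yk k.+1 `<=` Yk k) -> \bigcap_k Yk k = Y ->
  nbhd_in_cube Y V -> exists N, Yk N `<=` V.
Proof.
move=> cY dec capY [_ [Op [oO YO OV]]].
have hC : hausdorff_space (cube R) by apply: hausdorff_product => _; exact: Rhausdorff.
have [c0 _] := cY 0%N.
move: c0; rewrite (@compact_cover (cube R)) => /(_ (option nat) setT
  (fun i => if i is Some n then ~` Yk n else Op)).
case.
- move=> [n|] _ //; apply: closed_openC; apply: compact_closed hC _; exact: (cY n).1.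
- move=> x Y0x; have [Ox|nOx] := pselect (Op x).
    by exists None.
  have nYx : ~ Y x by move=> Yx; apply: nOx; exact: (YO _ Yx).1.
  have [n nYn] : exists n, ~ Yk n x.
    apply/existsNP => hall; apply: nYx; rewrite -capY => n _; exact: hall.
  by exists (Some n).
move=> D' _ cov.
exists (\max_(i <- finmap.enum_fset D') (odflt 0 i))%N => x YNx.
have Y0x : Yk 0%N x by exact: (decr_le dec (leq0n _) YNx).
have [i iD' fix'] := cov x Y0x.
move: iD' fix'; case: i => [n|] /= iD'.
  move=> nYn; exfalso; apply: nYn; apply: (decr_le dec _ YNx).
  by apply: (@leq_bigmax_seq _ _ _ (fun i => odflt 0 i) (Some n)).
move=> Ox; apply: OV; split => //; exact: (cY _).2 _ YNx.
Qed.

Section Tree.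
Variables (R : realType) (U : Type) (S : nat -> set U) (r : nat -> U -> U).

Definition lev (a : tvtx U) : nat := if a is Some (n, _) then n.+1 else 0%N.
Definition hgt (p : tpoint R U) : R :=
  match p with
  | Vx a => (lev a)%:R
  | Ex a b t => (lev a)%:R + t * ((lev b)%:R - (lev a)%:R)
  end.

Lemma adj0_lev a b : tadj0 S r a b -> lev a = (lev b).+1.
Proof.
case: a => [[[|n] x]|] //; case: b => [[m y]|] //=.
by case=> _ -> _ _.
Qed.

Lemma adj_lev a b : tadj S r a b -> lev a = (lev b).+1 \/ lev b = (lev a).+1.
Proof. by case=> /adj0_lev; [left|right]. Qed.

Lemma walk_lev a b m : twalk S r a b m ->
  [/\ (lev a <= lev b + m)%N, (lev b <= lev a + m)%N & exists k, (lev a + lev b + m = 2 * k)%N].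
Proof.
elim=> [c|c d e n /adj_lev hab _ [IH1 IH2 [k IHk]]].
  by split; [lia|lia|exists (lev c); lia].
case: hab => hab; (split; [lia|lia|]).
  by exists k.+1; lia.
by exists k; lia.
Qed.

Lemma walk0 a b : twalk S r a b 0 -> a = b.
Proof. by move=> h; inversion h. Qed.

Lemma walk1 a b : twalk S r a b 1 -> tadj S r a b.
Proof. by move=> h; inversion h; subst; move/walk0: H3 => <-. Qed.

Lemma walk_cat a b c m n : twalk S r a b m -> twalk S r b c n -> twalk S r a c (m + n).
Proof.
elim=> [//|x y z k hxy _ IH] /IH h; rewrite addSn; exact: twalkS hxy h.
Qed.

Lemma adj_sym a b : tadj S r a b -> tadj S r b a.
Proof. by case; [right|left]. Qed.

Lemma walk_rev a b m : twalk S r a b m -> twalk S r b a m.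
Proof.
elim=> [x|x y z k hxy _ IH]; first exact: twalk0.
rewrite -addn1; apply: walk_cat IH _; apply: twalkS (adj_sym hxy) (twalk0 _ _ _).
Qed.

Lemma walk_single a b : tadj S r a b -> twalk S r a b 1.
Proof. by move=> h; apply: twalkS h (twalk0 _ _ _). Qed.

End Tree.

Section Tree2.
Variables (R : realType) (U : Type) (S : nat -> set U) (r : nat -> U -> U).
Local Notation valid := (valid_tpoint (R:=R) S r).
Local Notation PL := (path_lengths (R:=R) S r).
Local Notation lev := (@lev U).
Local Notation hgt := (@hgt R U).

Lemma adj_levR a b : tadj S r a b ->
  (lev a)%:R = (lev b)%:R + 1 :> R \/ (lev b)%:R = (lev a)%:R + 1 :> R.
Proof. by case/adj_lev => ->; [left|right]; rewrite -natr1. Qed.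

Lemma exit_hgt p u e : valid p -> exit_of p u e ->
  `|hgt p - (lev u)%:R| <= e /\ 0 <= e.
Proof.
case: p => [a|a b t] /=.
  by move=> _ [-> ->]; rewrite subrr normr0.
move=> [/adj_levR hab /andP[t0 t1]] [] [-> ->]; (split; last by lra);
  rewrite ler_norml; case: hab => ->; apply/andP; split; lra.
Qed.

Lemma walk_levR a b m : twalk S r a b m ->
  `|(lev a)%:R - (lev b)%:R| <= m%:R :> R.
Proof.
case/walk_lev => h1 h2 _; rewrite ler_norml.
have h1' : (lev a)%:R <= (lev b)%:R + m%:R :> R by rewrite -natrD ler_nat.
have h2' : (lev b)%:R <= (lev a)%:R + m%:R :> R by rewrite -natrD ler_nat.
apply/andP; split; lra.
Qed.

Lemma len_props p q d : valid p -> valid q -> PL p q d ->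
  0 <= d /\ `|hgt p - hgt q| <= d.
Proof.
move=> vp vq [[u [e1 [w [e2 [m [ep eq wm ->]]]]]]|[a [b [t [s [ep hq]]]]]].
  have [h1 e10] := exit_hgt vp ep.
  have [h2 e20] := exit_hgt vq eq.
  have h3 := walk_levR wm.
  have m0 : 0 <= m%:R :> R by [].
  split; first lra.
  move: h1 h2 h3; rewrite !ler_norml => /andP[h1 h1'] /andP[h2 h2'] /andP[h3 h3'].
  apply/andP; split; lra.
subst p; move: vp => [/adj_levR hab /andP[t0 t1]].
case: hq => -[-> ->]; split => //=.
  have -> : (lev a)%:R + t * ((lev b)%:R - (lev a)%:R) -
      ((lev a)%:R + s * ((lev b)%:R - (lev a)%:R)) =
      (t - s) * ((lev b)%:R - (lev a)%:R) :> R by ring.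
  rewrite normrM; case: hab => ->.
    have -> : (lev b)%:R - ((lev b)%:R + 1) = -1 :> R by ring.
    by rewrite normrN1 mulr1.
  have -> : (lev a)%:R + 1 - (lev a)%:R = 1 :> R by ring.
  by rewrite normr1 mulr1.
have -> : (lev a)%:R + t * ((lev b)%:R - (lev a)%:R) -
    ((lev b)%:R + s * ((lev a)%:R - (lev b)%:R)) =
    (t - (1 - s)) * ((lev b)%:R - (lev a)%:R) :> R by ring.
rewrite normrM; case: hab => ->.
  have -> : (lev b)%:R - ((lev b)%:R + 1) = -1 :> R by ring.
  by rewrite normrN1 mulr1.
have -> : (lev a)%:R + 1 - (lev a)%:R = 1 :> R by ring.
by rewrite normr1 mulr1.
Qed.

End Tree2.

Section Tree3.
Variables (R : realType) (U : Type) (S : nat -> set U) (r : nat -> U -> U).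
Local Notation valid := (valid_tpoint (R:=R) S r).
Local Notation PL := (path_lengths (R:=R) S r).
Local Notation dist := (tdist (R:=R) S r).
Local Notation lev := (@lev U).
Local Notation hgt := (@hgt R U).

Lemma inf_cases (E : set R) c : (forall d, E d -> c <= d) -> inf E = 0 \/ c <= inf E.
Proof.
move=> h; have [[d Ed]|nE] := pselect (E !=set0).
  by right; apply: lb_le_inf; [exists d | move=> y /h].
left; suff -> : E = set0 by exact: inf0.
by apply/seteqP; split => // x Ex; exfalso; apply: nE; exists x.
Qed.

Lemma tdist_lb p q d0 : valid p -> valid q -> PL p q d0 -> `|hgt p - hgt q| <= dist p q.
Proof.
move=> vp vq h; apply: lb_le_inf; first by exists d0.
by move=> y /(len_props vp vq) [].
Qed.

Lemma tdist_ub p q d : valid p -> valid q -> PL p q d -> dist p q <= d.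
Proof.
move=> vp vq h; apply: (ge_inf (E := PL p q)) h.
by exists 0 => y /(len_props vp vq) [].
Qed.

Lemma tdist_ge0 p q : valid p -> valid q -> 0 <= dist p q.
Proof.
move=> vp vq.
have H0 : forall d, PL p q d -> 0 <= d by move=> y /(len_props vp vq) [].
by rewrite /tdist; case: (inf_cases H0) => [->|].
Qed.

Lemma PL_self p : valid p -> PL p p 0.
Proof.
case: p => [a|a b t] _.
  left; exists a, 0, a, 0, 0%N; split => //; first exact: twalk0.
  by rewrite !add0r.
right; exists a, b, t, t; split => //; left; split => //; by rewrite subrr normr0.
Qed.

Lemma tdist_self p : valid p -> dist p p = 0.
Proof.
move=> vp; apply/eqP; rewrite eq_le tdist_ge0 // andbT.
exact: tdist_ub (PL_self vp).
Qed.

Lemma PL_sym p q d : PL p q d -> PL q p d.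
Proof.
move=> [[u [e1 [w [e2 [m [ep eq wm ->]]]]]]|[a [b [t [s [-> hq]]]]]].
  left; exists w, e2, u, e1, m; split => //; first exact: walk_rev.
  ring.
right; case: hq => -[-> ->].
  by exists a, b, s, t; split => //; left; split => //; rewrite distrC.
exists b, a, s, t; split => //; right; split => //.
by congr `|_|; ring.
Qed.

Lemma tdist_sym p q : dist p q = dist q p.
Proof.
rewrite /tdist; congr inf; apply/seteqP; split => d; exact: PL_sym.
Qed.

Lemma nE (x y : R) : y = x \/ y = - x -> `|x| = `|y|.
Proof. by case=> ->; rewrite ?normrN. Qed.

Ltac nEt := apply: nE; first [by left; ring | by right; ring].

Lemma PL_flip a b t q : PL (Ex a b t) q = PL (Ex b a (1 - t)) q.
Proof.
apply/seteqP; split => d.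
  move=> [[u [e1 [w [e2 [m [ep eq wm ->]]]]]]|[a' [b' [t' [s [[ea eb et] hq]]]]]].
    left; exists u, e1, w, e2, m; split => //.
    by case: ep => -[-> ->]; [right|left]; split => //; ring.
  subst a' b' t'; right; case: hq => -[-> ->].
    exists b, a, (1 - t), s; split => //; right; split => //; nEt.
  exists b, a, (1 - t), s; split => //; left; split => //; nEt.
move=> [[u [e1 [w [e2 [m [ep eq wm ->]]]]]]|[a' [b' [t' [s [[ea eb et] hq]]]]]].
  left; exists u, e1, w, e2, m; split => //.
  by case: ep => -[-> ->]; [right|left]; split => //; ring.
subst a' b' t'; right; case: hq => -[-> ->].
  exists a, b, t, s; split => //; right; split => //; nEt.
exists a, b, t, s; split => //; left; split => //; nEt.
Qed.

Lemma tdist_flip a b t q : dist (Ex a b t) q = dist (Ex b a (1 - t)) q.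
Proof. by rewrite /tdist PL_flip. Qed.

Lemma valid_flip a b t : valid (Ex a b t) -> valid (Ex b a (1 - t)).
Proof. by move=> [/adj_sym h /andP[t0 t1]]; split => //; apply/andP; split; lra. Qed.

Lemma hgt_flip a b t : hgt (Ex a b t) = hgt (Ex b a (1 - t)).
Proof. rewrite /=; ring. Qed.

Lemma PL_VV a b d : PL (@Vx R U a) (@Vx R U b) d -> exists m, twalk S r a b m /\ d = m%:R.
Proof.
move=> [[u [e1 [w [e2 [m [[-> ->] [-> ->] wm ->]]]]]]|[? [? [? [? [//]]]]]].
by exists m; split => //; rewrite add0r addr0.
Qed.

Lemma PL_VE a a' b' s d : PL (@Vx R U a) (Ex a' b' s) d ->
  exists m, (twalk S r a a' m /\ d = m%:R + s) \/ (twalk S r a b' m /\ d = m%:R + (1 - s)).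
Proof.
move=> [[u [e1 [w [e2 [m [[-> ->] eq wm ->]]]]]]|[? [? [? [? [//]]]]]].
exists m; case: eq => -[ew ->]; subst w; [left|right]; split => //; by rewrite add0r.
Qed.

End Tree3.

Section Root.
Variables (R : realType) (U : Type) (S : nat -> set U) (r : nat -> U -> U).
Hypothesis Hpar : forall n x, S n.+1 x -> S n (r n x).
Local Notation valid := (valid_tpoint (R:=R) S r).
Local Notation PL := (path_lengths (R:=R) S r).
Local Notation dist := (tdist (R:=R) S r).
Local Notation lev := (@lev U).
Local Notation hgt := (@hgt R U).

Lemma adj0_tvtx a b : tadj0 S r a b -> is_tvtx S a /\ is_tvtx S b.
Proof.
case: a => [[[|n] x]|] //; case: b => [[m y]|] //=.
by case=> Sx -> _ Sy.
Qed.

Lemma adj_tvtx a b : tadj S r a b -> is_tvtx S a /\ is_tvtx S b.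
Proof. by case=> /adj0_tvtx [? ?]. Qed.

Lemma walk_root a : is_tvtx S a -> twalk S r a None (lev a).
Proof.
case: a => [[n x]|] /=; last by move=> _; exact: twalk0.
elim: n x => [|n IH] x Sx.
  by apply: twalkS (twalk0 _ _ _); left.
apply: (@twalkS _ _ _ _ (Some (n, r n x))); first by left; split => //; exact: Hpar.
exact: IH (Hpar Sx).
Qed.

Lemma hgt_ge0 p : valid p -> 0 <= hgt p.
Proof.
case: p => [a|a b t] /=; first by [].
move=> [/(@adj_levR R) hab /andP[t0 t1]].
have A0 : 0 <= (lev a)%:R :> R by [].
have B0 : 0 <= (lev b)%:R :> R by [].
by case: hab => ->; lra.
Qed.

Lemma PL_root p : valid p -> PL (troot R U) p (hgt p).
Proof.
case: p => [a|a b t] /=.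
  move=> va; left; exists None, 0, a, 0, (lev a); split => //.
    exact/walk_rev/walk_root.
  by rewrite add0r addr0.
move=> [hab /andP[t0 t1]]; have [ta tb] := adj_tvtx hab.
case: (adj_lev hab) => hl.
  left; exists None, 0, b, (1 - t), (lev b); split => //.
  - by right.
  - exact/walk_rev/walk_root.
  - by rewrite hl -natr1; ring.
left; exists None, 0, a, t, (lev a); split => //.
- by left.
- exact/walk_rev/walk_root.
- by rewrite hl -natr1; ring.
Qed.

Lemma tdist_root p : valid p -> dist (troot R U) p = hgt p.
Proof.
move=> vp; have vr : valid (troot R U) by [].
apply/eqP; rewrite eq_le (tdist_ub vr vp (PL_root vp)) /=.
have := tdist_lb vr vp (PL_root vp); rewrite /= sub0r normrN ger0_norm //.
exact: hgt_ge0.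
Qed.

End Root.

Section Branch.
Variables (R : realType) (U : Type) (S : nat -> set U) (r : nat -> U -> U).
Variable c : nat -> U.
Hypothesis Hc : forall n, S n (c n) /\ c n = r n (c n.+1).
Local Notation valid := (valid_tpoint (R:=R) S r).
Local Notation PL := (path_lengths (R:=R) S r).
Local Notation dist := (tdist (R:=R) S r).
Local Notation lev := (@lev U).
Local Notation hgt := (@hgt R U).

Definition vt (n : nat) : tvtx U := if n is k.+1 then Some (k, c k) else None.

Definition Pbr (t : R) : tpoint R U :=
  if t == (Num.truncn t)%:R then @Vx R U (vt (Num.truncn t))
  else Ex (vt (Num.truncn t)) (vt (Num.truncn t).+1) (t - (Num.truncn t)%:R).

Lemma lev_vt n : lev (vt n) = n.
Proof. by case: n. Qed.

Lemma adj_vt n : tadj0 S r (vt n.+1) (vt n).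
Proof.
case: n => [|n] /=; first exact: (Hc 0).1.
by split => //; [exact: (Hc _).1 | exact: (Hc _).2 | exact: (Hc _).1].
Qed.

Lemma walk_vt i j : (i <= j)%N -> twalk S r (vt j) (vt i) (j - i) /\ twalk S r (vt i) (vt j) (j - i).
Proof.
move=> /subnK <-; rewrite addnK; set d := (j - i)%N; clearbody d.
suff h : twalk S r (vt (d + i)) (vt i) d by split => //; exact: walk_rev.
elim: d => [|d IH]; first exact: twalk0.
by rewrite addSn; apply: twalkS IH; left; exact: adj_vt.
Qed.

Lemma tvtx_vt n : is_tvtx S (vt n).
Proof. by case: n => //= n; exact: (Hc n).1. Qed.

Lemma Pbr_valid t : 0 <= t -> valid (Pbr t).
Proof.
move=> t0; rewrite /Pbr; case: ifPn => [_|nt]; first exact: tvtx_vt.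
have /andP[h1 h2] := truncn_itv t0.
split; first by right; exact: adj_vt.
rewrite subr_gt0 lt_neqAle h1 andbT eq_sym nt /=.
by rewrite -natr1 in h2; lra.
Qed.

Lemma hgt_Pbr t : hgt (Pbr t) = t.
Proof.
rewrite /Pbr; case: ifPn => [/eqP e|nt] /=; rewrite !lev_vt.
  exact/esym.
by rewrite -natr1; ring.
Qed.

Lemma Pbr0 : Pbr 0 = troot R U.
Proof. by rewrite /Pbr truncn0 eqxx. Qed.

Lemma PL_Pbr s t : 0 <= s -> s <= t -> PL (Pbr s) (Pbr t) (t - s).
Proof.
move=> s0 st; have t0 : 0 <= t by lra.
rewrite /Pbr; have := truncn_itv s0; have := truncn_itv t0.
move: (Num.truncn s) (Num.truncn t) => ns nt /andP[ht1 ht2] /andP[hs1 hs2].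
have nsnt : (ns <= nt)%N.
  rewrite leqNgt; apply/negP => h.
  have : nt.+1%:R <= ns%:R :> R by rewrite ler_nat.
  lra.
have [ens|lns] := eqVneq ns nt.
  subst nt; case: ifPn => [/eqP es|nes]; case: ifPn => [/eqP et|net].
  - left; exists (vt ns), 0, (vt ns), 0, 0%N; split => //; first exact: twalk0.
    by rewrite es et subrr !add0r.
  - left; exists (vt ns), 0, (vt ns), (t - ns%:R), 0%N; split => //.
    + by left.
    + exact: twalk0.
    + by rewrite es; ring.
  - exfalso; rewrite neq_lt in nes; case/orP: nes; lra.
  - right; exists (vt ns), (vt ns.+1), (s - ns%:R), (t - ns%:R); split => //.
    left; split => //.
    rewrite ler0_norm; last by lra.
    by ring.
have lt : (ns < nt)%N by rewrite ltn_neqAle lns nsnt.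
have [a [ea ha]] : exists a, exit_of (if s == ns%:R then @Vx R U (vt ns)
      else Ex (vt ns) (vt ns.+1) (s - ns%:R)) (vt a) (a%:R - s) /\ (a <= nt)%N.
  case: ifPn => [/eqP es|nes].
    by exists ns; split; [split => //; rewrite es subrr|exact: ltnW].
  exists ns.+1; split => //; right; split => //; rewrite -natr1; ring.
have eb : exit_of (if t == nt%:R then @Vx R U (vt nt)
      else Ex (vt nt) (vt nt.+1) (t - nt%:R)) (vt nt) (t - nt%:R).
  case: ifPn => [/eqP et|net].
    by split => //; rewrite et subrr.
  by left.
left; exists (vt a), (a%:R - s), (vt nt), (t - nt%:R), (nt - a)%N; split => //.
  exact: (walk_vt ha).2.
rewrite natrB //; ring.
Qed.

Lemma dist_Pbr s t : 0 <= s -> 0 <= t -> dist (Pbr s) (Pbr t) = `|s - t|.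
Proof.
wlog st : s t / s <= t.
  move=> h s0 t0; have [/h|/ltW ts] := leP s t; first by apply.
  by rewrite tdist_sym distrC; apply: h.
move=> s0 t0; have hp := PL_Pbr s0 st.
have vs := Pbr_valid s0; have vt' := Pbr_valid t0.
apply/eqP; rewrite eq_le; apply/andP; split.
  rewrite distrC ger0_norm ?subr_ge0 //; exact: tdist_ub hp.
by have := tdist_lb vs vt' hp; rewrite !hgt_Pbr.
Qed.

Lemma Pbr_branch : geod_complete_branch S r Pbr.
Proof.
split; [exact: Pbr_valid | exact: Pbr0 | move=> s t s0 t0; exact: dist_Pbr].
Qed.

End Branch.

Section Rigid.
Variables (R : realType) (U : Type) (S : nat -> set U) (r : nat -> U -> U).
Local Notation valid := (valid_tpoint (R:=R) S r).
Local Notation PL := (path_lengths (R:=R) S r).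
Local Notation dist := (tdist (R:=R) S r).
Local Notation lev := (@lev U).
Local Notation hgt := (@hgt R U).

Lemma walk_ge a b m : twalk S r a b m -> a <> b -> lev a = lev b -> (2 <= m)%N.
Proof.
move=> w nab e; have [h1 h2 [k hk]] := walk_lev w.
case: m w h1 h2 hk => [/walk0 //|[|m]] w h1 h2 hk //; lia.
Qed.

Lemma walk_ge1 a b m : twalk S r a b m -> lev b = (lev a).+1 -> (1 <= m)%N.
Proof. by move=> w e; have [h1 h2 _] := walk_lev w; lia. Qed.

Lemma Vdist_adj a b : lev b = (lev a).+1 ->
  dist (@Vx R U a) (@Vx R U b) = 1 -> tadj0 S r b a.
Proof.
move=> el d1; have [//|nadj] := pselect (tadj0 S r b a); exfalso.
have H3 : forall d, PL (@Vx R U a) (@Vx R U b) d -> 3 <= d.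
  move=> d /PL_VV [m [w ->]].
  have [h1 h2 [k hk]] := walk_lev w.
  have m1 : m <> 1%N.
    move=> em; subst m; case: (walk1 w) => h.
      by have := adj0_lev h; lia.
    exact: nadj.
  have : (3 <= m)%N by lia.
  by rewrite -(ler_nat R).
case: (inf_cases H3); rewrite -/(tdist S r _ _) d1; [move/eqP; rewrite oner_eq0 //|lra].
Qed.

Lemma EdistA x a b s : lev a = lev x -> lev b = (lev x).+1 -> 0 < s < 1 ->
  dist (@Vx R U x) (Ex a b s) = s -> x = a.
Proof.
move=> ea eb /andP[s0 s1] ds; have [//|nxa] := pselect (x = a); exfalso.
have H2 : forall d, PL (@Vx R U x) (Ex a b s) d -> 2 - s <= d.
  move=> d /PL_VE [m [[w ->]|[w ->]]].
    have : (2 <= m)%N by apply: walk_ge w nxa _.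
    rewrite -(ler_nat R) => h; lra.
  have : (1 <= m)%N by apply: walk_ge1 w _; rewrite eb.
  rewrite -(ler_nat R) => h; lra.
case: (inf_cases H2); rewrite -/(tdist S r _ _) ds; lra.
Qed.

Lemma EdistB x a b s : lev a = (lev b).-1 -> lev x = lev b -> (0 < lev b)%N -> 0 < s < 1 ->
  dist (@Vx R U x) (Ex a b s) = 1 - s -> x = b.
Proof.
move=> ea eb b0 /andP[s0 s1] ds; have [//|nxb] := pselect (x = b); exfalso.
have H2 : forall d, PL (@Vx R U x) (Ex a b s) d -> 1 + s <= d.
  move=> d /PL_VE [m [[w ->]|[w ->]]].
    have w' := walk_rev w.
    have : (1 <= m)%N by apply: walk_ge1 w' _; lia.
    rewrite -(ler_nat R) => h; lra.
  have : (2 <= m)%N by apply: walk_ge w nxb _.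
  rewrite -(ler_nat R) => h; lra.
case: (inf_cases H2); rewrite -/(tdist S r _ _) ds; lra.
Qed.

Lemma normalize a b s : valid (Ex a b s) ->
  exists a' b' s', [/\ valid (Ex a' b' s'), lev b' = (lev a').+1,
    hgt (Ex a' b' s') = hgt (Ex a b s),
    (forall q, dist (Ex a b s) q = dist (Ex a' b' s') q) &
    (forall q, dist q (Ex a b s) = dist q (Ex a' b' s'))].
Proof.
move=> v; have [hab _] := v; case: (adj_lev hab) => e.
  exists b, a, (1 - s); split.
  - exact: valid_flip.
  - by [].
  - by rewrite -hgt_flip.
  - by move=> q; rewrite tdist_flip.
  - by move=> q; rewrite tdist_sym tdist_flip tdist_sym.
by exists a, b, s; split.
Qed.

End Rigid.

Lemma nat_gap (R : realType) (m n : nat) (s : R) : 0 < s < 1 -> m%:R + s = n%:R -> False.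
Proof.
move=> /andP[s0 s1] e; case: (ltngtP m n) => h.
- have : m.+1%:R <= n%:R :> R by rewrite ler_nat.
  rewrite -natr1; lra.
- have : n%:R < m%:R :> R by rewrite ltr_nat.
  lra.
- subst n; lra.
Qed.

Section Converse.
Variables (R : realType) (U : Type) (S : nat -> set U) (r : nat -> U -> U).
Hypothesis Hpar : forall n x, S n.+1 x -> S n (r n x).
Local Notation valid := (valid_tpoint (R:=R) S r).
Local Notation PL := (path_lengths (R:=R) S r).
Local Notation dist := (tdist (R:=R) S r).
Local Notation lev := (@lev U).
Local Notation hgt := (@hgt R U).
Variable F : R -> tpoint R U.
Hypothesis HF : geod_complete_branch S r F.

Lemma hgt_F t : 0 <= t -> hgt (F t) = t.
Proof.
move=> t0; case: HF => vF F0 dF.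
rewrite -(tdist_root Hpar (vF t t0)) -F0 dF ?lexx // sub0r normrN ger0_norm //.
Qed.

Lemma F_int n : exists a, F n%:R = @Vx R U a /\ lev a = n /\ is_tvtx S a.
Proof.
case: HF => vF _ _.
have := hgt_F (ler0n R n); have := vF n%:R (ler0n R n).
case: (F n%:R) => [a|a b s] /= v h.
  by exists a; split => //; split => //; apply/eqP; rewrite -(eqr_nat R) h.
exfalso; case: v => /(@adj_levR R) hab s01.
case: hab => e; rewrite e in h.
  apply: (@nat_gap R (lev b) n (1 - s)); first by move: s01 => /andP[? ?]; apply/andP; split; lra.
  by rewrite -h; ring.
apply: (@nat_gap R (lev a) n s) => //; rewrite -h; ring.
Qed.

Lemma converse : exists c : nat -> U,
  (forall n, S n (c n) /\ c n = r n (c n.+1)) /\ branch_eq S r (Pbr c) F.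
Proof.
have [vF F0 dF] := HF.
have /choice [w hw] := F_int.
have adjw : forall n, tadj0 S r (w n.+1) (w n).
  move=> n; have [e1 [l1 _]] := hw n; have [e2 [l2 _]] := hw n.+1.
  apply: (@Vdist_adj R); first by rewrite l1 l2.
  rewrite -e1 -e2 dF // distrC -natr1 addrC addKr ger0_norm //.
have w0 : w 0%N = None.
  by have [_ [] ] := hw 0%N; case: (w 0%N) => [[? ?]|].
have /choice [cc hcc] : forall n, exists x, w n.+1 = Some (n, x).
  move=> n; have [_ [l _]] := hw n.+1; move: l.
  by case: (w n.+1) => [[m x]|] //= [->]; exists x.
have vtw : forall n, vt cc n = w n by case => [|n] /=; rewrite ?w0 ?hcc.
have Hc : forall n, S n (cc n) /\ cc n = r n (cc n.+1).
  move=> n; have [_ [_ tv]] := hw n.+1; rewrite hcc in tv; split => //.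
  by have := adjw n.+1; rewrite !hcc /= => -[_ _ -> _].
exists cc; split => // t t0.
have /andP[hn1 hn2] := truncn_itv t0.
rewrite /Pbr; move: hn1 hn2; set n := Num.truncn t => hn1 hn2.
case: ifPn => [/eqP et|net].
  rewrite vtw; have [e _] := hw n; rewrite et -e; apply: tdist_self.
  by apply: vF.
have ht := hgt_F t0; have v := vF t t0.
case E : (F t) v ht => [a|a b s] v ht.
  exfalso; move: ht => /= ht.
  have : n = lev a by apply: truncn_def; rewrite -ht lexx /= ltr_nat ltnSn.
  by move=> en; apply: (negP net); rewrite en ht.
have [a' [b' [s' [v' eb' hg d1 d2]]]] := normalize v.
rewrite -hg in ht; move: ht => /=; rewrite eb' -natr1 => ht.
have {}ht : (lev a')%:R + s' = t by rewrite -ht; ring.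
have s'01 : 0 < s' < 1 by case: v'.
have ha' : n = lev a'.
  apply: truncn_def; rewrite -natr1; move: s'01 => /andP[? ?]; apply/andP; split; lra.
have ds1 : dist (@Vx R U (w n)) (Ex a' b' s') = s'.
  have [e _] := hw n; rewrite -e -d2 -E dF // distrC ger0_norm ?subr_ge0 //.
  by rewrite ha'; lra.
have ea : w n = a'.
  have lw : lev (w n) = n by case: (hw n) => _ [].
  by apply: EdistA ds1; rewrite ?lw ?eb' -?ha'.
have ds2 : dist (@Vx R U (w n.+1)) (Ex a' b' s') = 1 - s'.
  have [e _] := hw n.+1; rewrite -e -d2 -E dF //.
  rewrite ger0_norm; last by rewrite subr_ge0 ltW.
  by rewrite -natr1 ha'; lra.
have eb : w n.+1 = b'.
  apply: EdistB ds2.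
  - by rewrite eb'.
  - by have [_ [-> _]] := hw n.+1; rewrite eb' -ha'.
  - by rewrite eb'.
  - by [].
rewrite !vtw ea -hcc eb d2.
have -> : t - n%:R = s' by rewrite ha'; lra.
exact: tdist_self.
Qed.

End Converse.

Fixpoint Tm (g : nat -> nat) (M : nat) : nat :=
  if M is M'.+1 then maxn (Tm g M') (maxn M (g M)) else g 0%N.

Lemma Tm_ge g M k : (k <= M)%N -> (g k <= Tm g M)%N.
Proof.
elim: M k => [|M IH] k; first by rewrite leqn0 => /eqP ->.
rewrite leq_eqVlt => /orP[/eqP ->|h] /=; first by lia.
by have := IH k h; lia.
Qed.

Lemma Tm_geM g M : (M <= Tm g M)%N.
Proof. by elim: M => [|M IH] //=; lia. Qed.

Section Final.
Variables (R : realType) (X : topologicalType) (Yk : nat -> set (cube R)).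
Hypothesis dec : forall k, Yk k.+1 `<=` Yk k.

Lemma chain (f : nat -> X -> cube R) A m :
  (forall t, (m <= t)%N -> homotopic_in A (f t.+1) (f t)) ->
  forall s, (m <= s)%N -> homotopic_in A (f s) (f m).
Proof.
move=> h; have cm : cont_into A (f m) by case: (h m (leqnn m)).
elim=> [|s IH]; first by rewrite leqn0 => /eqP e; subst m; exact: htpy_refl.
rewrite leq_eqVlt => /orP[/eqP <-|ms]; first exact: htpy_refl cm.
exact: htpy_trans (h s ms) (IH ms).
Qed.

Lemma chain2 (f : nat -> X -> cube R) A m s1 s2 :
  (forall t, (m <= t)%N -> homotopic_in A (f t.+1) (f t)) ->
  (m <= s1)%N -> (m <= s2)%N -> homotopic_in A (f s1) (f s2).
Proof.
move=> h h1 h2; exact: htpy_trans (chain h h1) (htpy_sym (chain h h2)).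
Qed.

Definition mf (f : nat -> X -> cube R) N :=
  xget 0%N [set m | forall t, (m <= t)%N -> homotopic_in (Yk N) (f t.+1) (f t)].

Lemma mfP f : approximative Yk f -> forall N t, (mf f N <= t)%N ->
  homotopic_in (Yk N) (f t.+1) (f t).
Proof.
move=> [_ ap] N; rewrite /mf.
have := @xgetPex _ 0%N [set m | forall t, (m <= t)%N -> homotopic_in (Yk N) (f t.+1) (f t)].
by apply; exact: ap.
Qed.

Definition TT f N := Tm (mf f) N.
Definition cls f N := homclass (Yk N) (f (TT f N)).

Lemma cont_le (f : nat -> X -> cube R) N t : approximative Yk f -> (N <= t)%N -> cont_into (Yk N) (f t).
Proof. by move=> [ci _] h; apply: cont_into_mono (decr_le dec h) (ci t). Qed.

Lemma cls_Hc (f : nat -> X -> cube R) : approximative Yk f ->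
  forall N, hclasses (X:=X) Yk N (cls f N) /\ cls f N = pstar Yk N (cls f N.+1).
Proof.
move=> ap N; split.
  by exists (f (TT f N)); split => //; apply: cont_le => //; exact: Tm_geM.
rewrite /cls (pstar_homclass (@dec N)); last first.
  by apply: cont_le => //; exact: Tm_geM.
apply: homclass_eq; apply: (chain2 (mfP ap (N:=N))); apply: Tm_ge => //.
Qed.

End Final.

Lemma Pbr_nat (R : realType) (U : Type) (c : nat -> U) (n : nat) :
  Pbr (R:=R) c n%:R = Vx R (vt c n).
Proof.
have e : Num.truncn (n%:R : R) = n.
  by apply: truncn_def; rewrite lexx ltr_nat ltnSn.
by rewrite /Pbr e eqxx.
Qed.

Lemma Vdist0 (R : realType) (U : Type) (S : nat -> set U) (r : nat -> U -> U) a b m :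
  twalk S r a b m -> tdist S r (Vx R a) (Vx R b) = 0 -> a = b.
Proof.
move=> w d0; have [//|nab] := pselect (a = b); exfalso.
have H1 : forall d, path_lengths S r (Vx R a) (Vx R b) d -> 1 <= d.
  move=> d /PL_VV [k [w' ->]]; rewrite ler1n lt0n; apply/negP => /eqP k0.
  by subst k; apply: nab; exact: walk0 w'.
have hm : path_lengths S r (Vx R a) (Vx R b) m%:R.
  by left; exists a, 0, b, 0, m; split => //; rewrite add0r addr0.
have := lb_le_inf (ex_intro _ _ hm) H1.
by change (1 <= tdist S r (Vx R a) (Vx R b) -> False); rewrite d0; lra.
Qed.

Unset Implicit Arguments.
Set Strict Implicit.

Theorem proposition9p2 (R : realType) (X : pseudoMetricType R)
  (Y : set (cube R)) (Yk : nat -> set (cube R)) :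
  hausdorff_space X -> compact [set: X] ->
  compact Y -> Y `<=` @hilbert_cube R ->
  (forall k, [/\ compact (Yk k), is_prism (Yk k) & nbhd_in_cube Y (Yk k)]) ->
  (forall k, Yk k.+1 `<=` Yk k) ->
  \bigcap_k Yk k = Y ->
  exists Phi : (nat -> X -> cube R) -> R -> tpoint R (set (X -> cube R)),
    [/\ (forall f, approximative Yk f ->
           geod_complete_branch (hclasses Yk) (pstar Yk) (Phi f)),
        (forall f g, approximative Yk f -> approximative Yk g ->
           (approx_homotopic Y f g <->
            branch_eq (hclasses Yk) (pstar Yk) (Phi f) (Phi g))) &
        (forall F, geod_complete_branch (hclasses Yk) (pstar Yk) F ->
           exists2 f, approximative Yk f &
             branch_eq (hclasses Yk) (pstar Yk) (Phi f) F)].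
Proof.
move=> _ _ _ _ hY dec capY.
have Hpar : forall n x, hclasses (X:=X) Yk n.+1 x -> hclasses Yk n (pstar Yk n x).
  move=> n x [f [cf ->]]; exists f; split.
    exact: cont_into_mono (@dec n) cf.
  exact: pstar_homclass (@dec n) cf.
have cYh : forall k, compact (Yk k) /\ Yk k `<=` @hilbert_cube R.
  by move=> k; have [? _ [? _]] := hY k.
exists (fun f => Pbr (R:=R) (cls Yk f)); split.
- move=> f ap; exact: Pbr_branch (cls_Hc dec ap).
- move=> f g af ag; split.
  + move=> ah t t0.
    have e : cls Yk f = cls Yk g.
      apply/funext => N; have [_ _ nN] := hY N.
      have [k0 hk0] := ah (Yk N) nN.
      pose k := maxn k0 (maxn (TT Yk f N) (TT Yk g N)).
      apply: homclass_eq.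
      have h1 : homotopic_in (Yk N) (f (TT Yk f N)) (f k).
        apply: (chain2 (mfP af (N:=N))); first exact: Tm_ge.
        by apply: leq_trans (Tm_ge _ (leqnn N)) _; rewrite /k /TT; lia.
      have h2 : homotopic_in (Yk N) (g k) (g (TT Yk g N)).
        apply: (chain2 (mfP ag (N:=N))); last exact: Tm_ge.
        by apply: leq_trans (Tm_ge _ (leqnn N)) _; rewrite /k /TT; lia.
      apply: htpy_trans h1 (htpy_trans (hk0 k _) h2); rewrite /k; lia.
    rewrite e; apply: tdist_self; apply: Pbr_valid t0. exact: (cls_Hc dec ag).
  + move=> be V hV.
    have [N YNV] := eventually_inside cYh dec capY hV.
    have hfg : homotopic_in (Yk N) (f (TT Yk f N)) (g (TT Yk g N)).
      have := be N.+1%:R (ler0n _ _); rewrite !Pbr_nat => d0.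
      have wf := (walk_vt (cls_Hc dec af) (leq0n N.+1)).1.
      have wg := (walk_vt (cls_Hc dec ag) (leq0n N.+1)).2.
      have := Vdist0 (walk_cat wf wg) d0; case => e.
      apply: homclass_inv e _; apply: cont_le => //; exact: Tm_geM.
    exists (maxn (TT Yk f N) (TT Yk g N)) => k hk.
    apply: htpy_mono YNV _.
    have h1 : homotopic_in (Yk N) (f k) (f (TT Yk f N)).
      apply: (chain2 (mfP af (N:=N))); last exact: Tm_ge.
      by apply: leq_trans (Tm_ge _ (leqnn N)) _; rewrite /TT in hk; lia.
    have h2 : homotopic_in (Yk N) (g (TT Yk g N)) (g k).
      apply: (chain2 (mfP ag (N:=N))); first exact: Tm_ge.
      by apply: leq_trans (Tm_ge _ (leqnn N)) _; rewrite /TT in hk; lia.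
    exact: htpy_trans h1 (htpy_trans hfg h2).
- move=> F HFb; have [c [Hc be]] := converse Hpar HFb.
  have /choice [fs hfs] : forall n, exists f, cont_into (Yk n) f /\ c n = homclass (Yk n) f.
    by move=> n; have [[f [cf ->]] _] := Hc n; exists f.
  have step : forall t, homotopic_in (Yk t) (fs t.+1) (fs t).
    move=> t; have [_ e] := Hc t.
    rewrite (hfs t).2 (hfs t.+1).2 (pstar_homclass (@dec t) (hfs t.+1).1) in e.
    apply: htpy_sym; apply: homclass_inv e _.
    exact: cont_into_mono (@dec t) (hfs t.+1).1.
  have ap : approximative Yk fs.
    split; first by move=> k; exact: (hfs k).1.
    move=> N; exists N => t hNt; exact: htpy_mono (decr_le dec hNt) (step t).
  exists fs => //.
  have -> : cls Yk fs = c.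
    apply/funext => N; rewrite /cls (hfs N).2; apply: homclass_eq.
    apply: (@chain _ _ fs (Yk N) N); last exact: Tm_geM.
    move=> t hNt; exact: htpy_mono (decr_le dec hNt) (step t).
  exact: be.
Qed.
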